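(* Let $T=\begin{pmatrix} A_1 & \cdots & A_N\\ B_1&\cdots&B_N\end{pmatrix}$ be a complex matrix partitioned into $2\times N$ blocks, let $p>0$, and suppose that the norm compression $\mathcal C_p(T)$ has rank at most $1$. Then $\|T\|_p\le\|\mathcal C_p(T)\|_p$ if $p\ge 2$, and $\|T\|_p\ge\|\mathcal C_p(T)\|_p$ if $0<p\le 2$.
   Context: For a matrix $X$ and $r>0$, $\|X\|_r=(\operatorname{Tr}|X|^r)^{1/r}$ with $|X|=(X^*X)^{1/2}$ (a norm for $r\ge1$, a quasi-norm for $0<r<1$). In a $2\times N$ partitioned block matrix all blocks in a block row have the same number of rows and all blocks in a block column have the same number of columns. The norm compression is the $2\times N$ real matrix $\mathcal C_p(T)=\begin{pmatrix} \|A_1\|_p & \cdots & \|A_N\|_p\\ \|B_1\|_p&\cdots&\|B_N\|_p\end{pmatrix}$. *)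

(* Defs.v *)
From mathcomp Require Import all_boot all_order all_algebra.
From mathcomp Require Import all_classical all_reals all_analysis.
From mathcomp.real_closed Require Import complex.
Set Implicit Arguments. Unset Strict Implicit. Unset Printing Implicit Defensive.
Import Order.TTheory GRing.Theory Num.Theory.
Local Open Scope ring_scope.

Definition adjmx (R : realType) (m n : nat) (X : 'M[R[i]]_(m, n)) : 'M[R[i]]_(n, m) :=
  map_mx Num.conj (trmx X).

(* Tr |X|^r: |X| = (X^* X)^{1/2}, whose eigenvalues are the square roots of the
   eigenvalues lambda_k >= 0 of the (positive semidefinite) Hermitian matrix X^* X;
   these eigenvalues (with multiplicity) are given by the library's spectral
   decomposition spectral_diag. *)
Definition schatten_tr (R : realType) (m n : nat) (X : 'M[R[i]]_(m, n)) (r : R) : R :=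
  \sum_(k < n) (complex.Re (spectral_diag (adjmx X *m X) 0 k)) `^ (r / 2).

Definition schatten (R : realType) (m n : nat) (X : 'M[R[i]]_(m, n)) (r : R) : R :=
  schatten_tr X r `^ r^-1.

Definition block2N (R : realType) (N m1 m2 : nat) (n : 'I_N -> nat)
    (A : forall j : 'I_N, 'M[R[i]]_(m1, n j)) (B : forall j : 'I_N, 'M[R[i]]_(m2, n j))
  : 'M[R[i]]_(m1 + m2, \sum_(j < N) n j) :=
  col_mx (\mxrow_(j < N) A j) (\mxrow_(j < N) B j).

Definition norm_compression (R : realType) (N m1 m2 : nat) (n : 'I_N -> nat)
    (A : forall j : 'I_N, 'M[R[i]]_(m1, n j)) (B : forall j : 'I_N, 'M[R[i]]_(m2, n j))
    (p : R) : 'M[R]_(2, N) :=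
  \matrix_(i < 2, j < N) (if i == ord0 then schatten (A j) p else schatten (B j) p).

Definition mxRtoC (R : realType) (m n : nat) (M : 'M[R]_(m, n)) : 'M[R[i]]_(m, n) :=
  map_mx (real_complex R) M.

(* Main.v *)
Require Import Defs.
From mathcomp Require Import all_boot all_order all_algebra.
From mathcomp Require Import all_classical all_reals all_analysis.
From mathcomp.real_closed Require Import complex.
From mathcomp Require Import ring lra.
Set Implicit Arguments. Unset Strict Implicit. Unset Printing Implicit Defensive.
Import Order.TTheory GRing.Theory Num.Theory.
Local Open Scope ring_scope.


Section Scalar.
Variable R : realType.
Variables (q sg : R).
Hypothesis q0 : 0 < q.
Hypothesis Hsg : (sg = 1 /\ 1 <= q) \/ (sg = -1 /\ q <= 1).

Lemma amgm (r u : R) : 0 < r -> r <= 1 -> 0 <= u -> u `^ r <= r * u + (1 - r).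
Proof.
move=> r0 r1 u0.
have [->|r1'] := eqVneq r 1; first by rewrite powRr1 // mul1r subrr addr0.
have r1s : r < 1 by rewrite lt_neqAle r1' r1.
have := @conjugate_powR R (u `^ r) 1 (r^-1) ((1 - r)^-1) (powR_ge0 _ _) ler01.
rewrite invr_gt0 r0 invr_gt0 subr_gt0 r1s !invrK => /(_ isT isT).
rewrite addrCA subrr addr0 => /(_ erefl).
by rewrite mulr1 -powRrM mulfV ?gt_eqF // powRr1 // powR1 (mulrC u) mul1r.
Qed.

Lemma tangent (t : R) : 0 <= t -> sg * (1 + q * (t - 1)) <= sg * t `^ q.
Proof.
move=> t0; case: Hsg => [[-> q1]|[-> q1]]; rewrite ?mul1r ?mulN1r.
- have q0' : 0 < q^-1 by rewrite invr_gt0.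
  have := @amgm q^-1 (t `^ q) q0' _ (powR_ge0 _ _).
  rewrite invf_le1 // => /(_ q1).
  rewrite -powRrM mulfV ?gt_eqF // powRr1 // => H.
  have : q * t <= q * (q^-1 * t `^ q + (1 - q^-1)) by rewrite ler_pM2l.
  rewrite mulrDr mulrA mulfV ?gt_eqF // mul1r mulrBr mulr1 mulfV ?gt_eqF //.
  move=> H2; rewrite mulrBr mulr1; lra.
- rewrite lerN2.
  have := @amgm q t q0 q1 t0; rewrite mulrBr mulr1; lra.
Qed.

Lemma sg_cases : (sg = 1) \/ (sg = -1).
Proof. by case: Hsg => [[]|[]]; auto. Qed.

Lemma sg_mulr (w a b : R) : 0 <= w -> sg * a <= sg * b -> sg * (w * a) <= sg * (w * b).
Proof. by move=> w0 H; rewrite mulrCA [X in _ <= X]mulrCA ler_wpM2l. Qed.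

Lemma sg_sum (I : finType) (a b : I -> R) : (forall i, sg * a i <= sg * b i) ->
  sg * (\sum_i a i) <= sg * (\sum_i b i).
Proof. by move=> H; rewrite !mulr_sumr; apply: ler_sum => i _; apply: H. Qed.

Lemma sg_powR (a b r : R) : 0 <= a -> 0 <= b -> 0 <= r -> sg * a <= sg * b ->
  sg * a `^ r <= sg * b `^ r.
Proof.
move=> a0 b0 r0; case: sg_cases => ->; rewrite ?mul1r ?mulN1r ?lerN2 => H;
by apply: ge0_ler_powR.
Qed.

Lemma jensen (I : finType) (w x : I -> R) : (forall i, 0 <= w i) -> \sum_i w i = 1 ->
  (forall i, 0 <= x i) ->
  sg * (\sum_i w i * x i) `^ q <= sg * \sum_i w i * x i `^ q.
Proof.
move=> w0 w1 x0; set m := \sum_i w i * x i.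
have m0 : 0 <= m by apply: sumr_ge0 => i _; rewrite mulr_ge0.
have [m00|mpos] := eqVneq m 0.
  have wx0 i : w i * x i = 0.
    apply: (psumr_eq0P (P := predT) (F := fun i => w i * x i) _ m00) => //.
    by move=> j _; rewrite mulr_ge0.
  rewrite m00 powR0 ?gt_eqF // big1 // => i _.
  by have /eqP := wx0 i; rewrite mulf_eq0 => /orP[/eqP->|/eqP->]; rewrite ?mul0r // powR0 ?gt_eqF // mulr0.
have mgt : 0 < m by rewrite lt_neqAle eq_sym mpos m0.
have E i : x i `^ q = m `^ q * (x i / m) `^ q.
  by rewrite -powRM ?divr_ge0 // mulrCA mulfV ?mulr1.
under eq_bigr do rewrite E.
have Hs : \sum_i w i * (m `^ q * (1 + q * (x i / m - 1))) = m `^ q.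
  have F i : w i * (m `^ q * (1 + q * (x i / m - 1))) =
     m `^ q * (1 - q) * w i + (m `^ q * q / m) * (w i * x i).
    by rewrite /=; ring.
  under eq_bigr do rewrite F.
  rewrite big_split /= -!big_distrr /= w1 -/m mulr1.
  rewrite -mulrA mulVf // mulr1; ring.
rewrite -[X in sg * X <= _]Hs.
apply: sg_sum => i; apply: sg_mulr => //.
apply: sg_mulr; first by rewrite powR_ge0.
by apply: tangent; rewrite divr_ge0.
Qed.

Definition Nq n (x : 'I_n -> R) := (\sum_k x k `^ q) `^ q^-1.

Lemma Nq_ge0 n (x : 'I_n -> R) : 0 <= Nq x.
Proof. exact: powR_ge0. Qed.

Lemma NqK n (x : 'I_n -> R) : Nq x `^ q = \sum_k x k `^ q.
Proof.
by rewrite /Nq -powRrM mulVf ?gt_eqF // powRr1 // sumr_ge0 // => i _; rewrite powR_ge0.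
Qed.

Lemma Nq_dstoch n (s : 'I_n -> 'I_n -> R) (g : 'I_n -> R) :
  (forall k i, 0 <= s k i) -> (forall k, \sum_i s k i = 1) -> (forall i, \sum_k s k i = 1) ->
  (forall i, 0 <= g i) ->
  sg * Nq (fun k => \sum_i s k i * g i) <= sg * Nq g.
Proof.
move=> s0 sr sc g0; apply: sg_powR; rewrite ?invr_ge0 ?(ltW q0) //.
- by apply: sumr_ge0 => i _; rewrite powR_ge0.
- by apply: sumr_ge0 => i _; rewrite powR_ge0.
apply: (@le_trans _ _ (sg * \sum_k \sum_i s k i * g i `^ q)).
  by apply: sg_sum => k; apply: jensen.
rewrite exchange_big /=; rewrite le_eqVlt; apply/orP; left; apply/eqP;
  congr (_ * _); apply: eq_bigr => i _; by rewrite -big_distrl /= sc mul1r.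
Qed.

Lemma Nq_eq0 n (x : 'I_n -> R) : (forall k, 0 <= x k) -> Nq x = 0 -> forall k, x k = 0.
Proof.
move=> x0 /powR_eq0_eq0 H k.
have := (psumr_eq0P (P := predT) (F := fun k => x k `^ q)) (fun i _ => powR_ge0 _ _) H k isT.
by move/powR_eq0_eq0.
Qed.

Lemma minkowski (I : finType) n (d : I -> 'I_n -> R) : (forall j k, 0 <= d j k) ->
  sg * Nq (fun k => \sum_j d j k) <= sg * \sum_j Nq (d j).
Proof.
move=> d0; set al := fun j => Nq (d j); set a := \sum_j al j.
have al0 j : 0 <= al j by apply: Nq_ge0.
have a0 : 0 <= a by apply: sumr_ge0.
have dz j : al j = 0 -> forall k, d j k = 0 by move=> H; apply: Nq_eq0.
have [aeq|aneq] := eqVneq a 0.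
  have alz j : al j = 0 by apply: (psumr_eq0P (P := predT) (F := al)) => // i _.
  rewrite aeq /Nq big1 ?powR0 ?gt_eqF ?invr_gt0 //.
  by move=> k _; rewrite big1 ?powR0 ?gt_eqF // => j _; rewrite (dz j (alz j)).
have apos : 0 < a by rewrite lt_neqAle eq_sym aneq a0.
have -> : a = (a `^ q) `^ q^-1 by rewrite -powRrM mulfV ?gt_eqF // powRr1.
apply: sg_powR; rewrite ?invr_ge0 ?(ltW q0) ?powR_ge0 //.
  by apply: sumr_ge0 => i _; rewrite powR_ge0.
set w := fun j => al j / a.
set x := fun j k => d j k / al j.
have E k : \sum_j d j k = a * \sum_j w j * x j k.
  rewrite big_distrr /=; apply: eq_bigr => j _; rewrite /w /x.
  have [z|nz] := eqVneq (al j) 0; first by rewrite z (dz j z) !mul0r mulr0.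
  by field; rewrite nz aneq.
have E2 k : (\sum_j d j k) `^ q = a `^ q * (\sum_j w j * x j k) `^ q.
  rewrite E powRM //; apply: sumr_ge0 => j _; rewrite mulr_ge0 ?divr_ge0 //.
under eq_bigr do rewrite E2.
rewrite -big_distrr /= -[X in _ <= sg * X]mulr1; apply: sg_mulr; first exact: powR_ge0.
have w0 j : 0 <= w j by rewrite divr_ge0.
have w1 : \sum_j w j = 1 by rewrite -big_distrl /= mulfV.
have x0 j k : 0 <= x j k by rewrite divr_ge0.
apply: (@le_trans _ _ (sg * \sum_k \sum_j w j * x j k `^ q)).
  by apply: sg_sum => k; apply: jensen.
rewrite exchange_big /= -w1; rewrite le_eqVlt; apply/orP; left; apply/eqP;
  congr (_ * _); apply: eq_bigr => j _; rewrite -big_distrr /=;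
  (have [z|nz] := eqVneq (al j) 0; first by rewrite /w z !mul0r);
  rewrite /x; under eq_bigr do rewrite powRM ?invr_ge0 //;
  rewrite -big_distrl /= -NqK -/(al j) -powRM ?invr_ge0 // mulfV // powR1 mulr1 //.
Qed.
End Scalar.



Section Mat.
Variable R : realType.
Local Notation CC := (R[i]).

Lemma adjmxE m n (X : 'M[CC]_(m, n)) i j : adjmx X i j = Num.conj (X j i).
Proof. by rewrite /adjmx !mxE. Qed.

Lemma adjmxK m n (X : 'M[CC]_(m, n)) : adjmx (adjmx X) = X.
Proof. by apply/matrixP => i j; rewrite !adjmxE conjCK. Qed.

Lemma adjmx_mul m n p (X : 'M[CC]_(m, n)) (Y : 'M[CC]_(n, p)) :
  adjmx (X *m Y) = adjmx Y *m adjmx X.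
Proof. by rewrite /adjmx trmx_mul map_mxM. Qed.

Lemma adjmxD m n (X Y : 'M[CC]_(m, n)) : adjmx (X + Y) = adjmx X + adjmx Y.
Proof. by apply/matrixP => i j; rewrite !mxE rmorphD. Qed.

Lemma unitary_adj n (U : 'M[CC]_n) : U \is unitarymx -> adjmx U *m U = 1%:M.
Proof. by move/unitarymxP => H; apply: mulmx1C. Qed.

Lemma unitary_adj' n (U : 'M[CC]_n) : U \is unitarymx -> U *m adjmx U = 1%:M.
Proof. by move/unitarymxP. Qed.

Definition gram n (M : 'M[CC]_n) := exists m (Y : 'M[CC]_(m, n)), M = adjmx Y *m Y.

Lemma gram_normal n (M : 'M[CC]_n) : gram M -> M \is normalmx.
Proof.
case=> m [Y ->]; apply/normalmxP.
rewrite (_ : map_mx Num.conj (adjmx Y *m Y)^T = adjmx (adjmx Y *m Y)) //.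
by rewrite adjmx_mul adjmxK.
Qed.

Definition lam n (M : 'M[CC]_n) k := complex.Re (spectral_diag M 0 k).

Lemma spectral_eq n (M : 'M[CC]_n) : gram M ->
  M = adjmx (spectralmx M) *m diag_mx (spectral_diag M) *m spectralmx M.
Proof.
move/gram_normal/orthomx_spectralP => H; rewrite {1}H invmx_unitary //.
exact: spectral_unitarymx.
Qed.

Lemma spectral_diagE n (M : 'M[CC]_n) : gram M ->
  diag_mx (spectral_diag M) = spectralmx M *m M *m adjmx (spectralmx M).
Proof.
move=> gM; have E := spectral_eq gM; have Uu := spectral_unitarymx M.
set U := spectralmx M in E Uu *; set d := spectral_diag M in E *.
rewrite [in RHS]E.
by rewrite !mulmxA unitary_adj' // mul1mx -mulmxA unitary_adj' // mulmx1.
Qed.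

Lemma gram_diag_ge0 n (M : 'M[CC]_n) k : gram M -> 0 <= spectral_diag M 0 k.
Proof.
move=> gM; have := congr1 (fun A : 'M[CC]_n => A k k) (spectral_diagE gM).
rewrite mxE eqxx mulr1n => ->.
case: gM => m [Y ->]; set U := spectralmx _.
rewrite !mulmxA -mulmxA -[U *m adjmx Y](adjmxK) adjmx_mul adjmxK mxE.
apply: sumr_ge0 => i _; rewrite adjmxE mulrC; exact: mul_conjC_ge0.
Qed.


Lemma lamE n (M : 'M[CC]_n) k : gram M -> spectral_diag M 0 k = real_complex R (lam M k).
Proof. by move=> gM; rewrite /lam RRe_real // ger0_real // gram_diag_ge0. Qed.

Lemma lam_ge0 n (M : 'M[CC]_n) k : gram M -> 0 <= lam M k.
Proof. by move=> gM; have := gram_diag_ge0 k gM; rewrite (lamE k gM) lecR. Qed.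


Lemma powR_phi (x r : R) : r != 0 -> x * (x `^ r / x) = x `^ r.
Proof.
move=> r0; have [->|x0] := eqVneq x 0; first by rewrite mul0r powR0.
by rewrite mulrCA mulfV // mulr1.
Qed.

Lemma transfer_scalar m n (s : 'I_m -> 'I_n -> R) (a : 'I_n -> R) (b : 'I_m -> R) r :
  r != 0 -> (forall k, \sum_i s i k = a k) -> (forall i, \sum_k s i k = b i) ->
  (forall i k, s i k != 0 -> a k = b i) -> \sum_k a k `^ r = \sum_i b i `^ r.
Proof.
move=> r0 sa sb sab.
transitivity (\sum_k \sum_i s i k * (b i `^ r / b i)).
  apply: eq_bigr => k _; rewrite -(powR_phi (a k) r0) -{1}sa big_distrl /=.
  apply: eq_bigr => i _; have [->|nz] := eqVneq (s i k) 0; first by rewrite !mul0r.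
  by rewrite (sab _ _ nz).
rewrite exchange_big /=; apply: eq_bigr => i _.
by rewrite -big_distrl /= sb powR_phi.
Qed.

Lemma Re_sum (I : finType) (F : I -> CC) : complex.Re (\sum_i F i) = \sum_i complex.Re (F i).
Proof. elim/big_rec2: _ => // i x y _ <-; by case: (F i); case: y. Qed.

Lemma gram_adj m n (X : 'M[CC]_(m, n)) : gram (adjmx X *m X).
Proof. by exists m, X. Qed.

Lemma gram_adj' m n (X : 'M[CC]_(m, n)) : gram (X *m adjmx X).
Proof. by exists n, (adjmx X); rewrite adjmxK. Qed.

Lemma transfer_core m n (X : 'M[CC]_(m, n)) (U : 'M[CC]_n) (V : 'M[CC]_m)
  (dP : 'rV[CC]_n) (dQ : 'rV[CC]_m) r : r != 0 ->
  U \is unitarymx -> V \is unitarymx ->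
  diag_mx dP = U *m (adjmx X *m X) *m adjmx U ->
  diag_mx dQ = V *m (X *m adjmx X) *m adjmx V ->
  \sum_k complex.Re (dP 0 k) `^ r = \sum_i complex.Re (dQ 0 i) `^ r.
Proof.
move=> r0 Uu Vu HP HQ.
pose W := V *m X *m adjmx U.
have aW : adjmx W = U *m adjmx X *m adjmx V by rewrite !adjmx_mul adjmxK mulmxA.
have HD : adjmx W *m W = diag_mx dP.
  rewrite HP aW !mulmxA.
  by rewrite -[U *m adjmx X *m adjmx V *m V](mulmxA) unitary_adj // mulmx1.
have HE : W *m adjmx W = diag_mx dQ.
  rewrite HQ aW !mulmxA.
  by rewrite -[V *m X *m adjmx U *m U](mulmxA) unitary_adj // mulmx1.
have Comm : diag_mx dP *m adjmx W = adjmx W *m diag_mx dQ.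
  by rewrite -HD -HE -mulmxA.
clearbody W.
apply: (@transfer_scalar _ _ (fun i k => complex.Re (Num.conj (W i k) * W i k))) => //.
- move=> k; rewrite -Re_sum; congr complex.Re.
  have E1 : (adjmx W *m W) k k = dP 0 k by rewrite HD mxE eqxx mulr1n.
  by rewrite -E1 mxE; apply: eq_bigr => i _; rewrite adjmxE.
- move=> i; rewrite -Re_sum; congr complex.Re.
  have E1 : (W *m adjmx W) i i = dQ 0 i by rewrite HE mxE eqxx mulr1n.
  by rewrite -E1 mxE; apply: eq_bigr => k _; rewrite adjmxE mulrC.
- move=> i k nz; congr complex.Re.
  have cz : Num.conj (W i k) != 0.
    by apply: contraNneq nz => ->; rewrite mul0r.
  have := congr1 (fun A : 'M[CC]_(n, m) => A k i) Comm.
  rewrite mul_diag_mx mul_mx_diag !mxE.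
  by move=> H; apply: (mulIf cz); rewrite H mulrC.
Qed.

Lemma transfer m n (X : 'M[CC]_(m, n)) r : r != 0 ->
  \sum_k lam (adjmx X *m X) k `^ r = \sum_i lam (X *m adjmx X) i `^ r.
Proof.
move=> r0; apply: (transfer_core r0 (spectral_unitarymx _) (spectral_unitarymx _)).
  exact: (spectral_diagE (gram_adj X)).
exact: (spectral_diagE (gram_adj' X)).
Qed.

Lemma Re_mul_real (z : CC) (x : R) : complex.Re (z * real_complex R x) = complex.Re z * x.
Proof. by case: z => a b /=; ring. Qed.

Lemma Re_ge0 (z : CC) : 0 <= z -> 0 <= complex.Re z.
Proof. by rewrite lecE => /andP[]. Qed.

Lemma diag_core n (I : finType) (M : 'M[CC]_n) (F : I -> 'M[CC]_n) (U : 'M[CC]_n)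
  (V : I -> 'M[CC]_n) (dM : 'rV[CC]_n) (dF : I -> 'rV[CC]_n) :
  U \is unitarymx -> (forall j, V j \is unitarymx) ->
  diag_mx dM = U *m M *m adjmx U ->
  (forall j, F j = adjmx (V j) *m diag_mx (dF j) *m V j) ->
  M = \sum_j F j ->
  (forall j i, dF j 0 i = real_complex R (complex.Re (dF j 0 i))) ->
  exists s : I -> 'I_n -> 'I_n -> R,
    [/\ (forall j k i, 0 <= s j k i), (forall j k, \sum_i s j k i = 1),
        (forall j i, \sum_k s j k i = 1) &
        forall k, complex.Re (dM 0 k) = \sum_j \sum_i s j k i * complex.Re (dF j 0 i)].
Proof.
move=> Uu Vu HM HF HS Hr.
pose W j := U *m adjmx (V j).
have aW j : adjmx (W j) = V j *m adjmx U by rewrite adjmx_mul adjmxK.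
have WW j : W j *m adjmx (W j) = 1%:M.
  by rewrite aW mulmxA -(mulmxA U) unitary_adj // mulmx1 unitary_adj'.
have WW' j : adjmx (W j) *m W j = 1%:M.
  by rewrite aW mulmxA -(mulmxA (V j)) unitary_adj // mulmx1 unitary_adj'.
have HFj j : U *m F j *m adjmx U = W j *m diag_mx (dF j) *m adjmx (W j).
  by rewrite HF aW !mulmxA.
clearbody W.
exists (fun j k i => complex.Re (W j k i * Num.conj (W j k i))); split.
- by move=> j k i; apply: Re_ge0; exact: mul_conjC_ge0.
- move=> j k; rewrite -Re_sum.
  have := congr1 (fun A : 'M[CC]_n => A k k) (WW j); rewrite !mxE eqxx mulr1n => E.
  rewrite -[X in _ = X]/(complex.Re 1) -E; congr complex.Re.
  by apply: eq_bigr => i _; rewrite !mxE.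
- move=> j i; rewrite -Re_sum.
  have := congr1 (fun A : 'M[CC]_n => A i i) (WW' j); rewrite !mxE eqxx mulr1n => E.
  rewrite -[X in _ = X]/(complex.Re 1) -E; congr complex.Re.
  by apply: eq_bigr => k _; rewrite !mxE mulrC.
- move=> k.
  have := congr1 (fun A : 'M[CC]_n => A k k) HM; rewrite mxE eqxx mulr1n => ->.
  rewrite HS mulmx_sumr mulmx_suml summxE Re_sum; apply: eq_bigr => j _.
  rewrite HFj mxE Re_sum; apply: eq_bigr => i _.
  rewrite mul_mx_diag mxE adjmxE Hr mulrAC Re_mul_real //.
Qed.

Lemma gram_mink (q sg : R) : 0 < q -> (sg = 1 /\ 1 <= q) \/ (sg = -1 /\ q <= 1) ->
  forall (I : finType) n (M : 'M[CC]_n) (F : I -> 'M[CC]_n),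
  gram M -> (forall j, gram (F j)) -> M = \sum_j F j ->
  sg * Nq q (lam M) <= sg * \sum_j Nq q (lam (F j)).
Proof.
move=> q0 Hsg I n M F gM gF HS.
have [s [s0 sr sc E]] := diag_core (spectral_unitarymx M)
  (fun j => spectral_unitarymx (F j)) (spectral_diagE gM) (fun j => spectral_eq (gF j)) HS
  (fun j i => lamE i (gF j)).
pose d j k := \sum_i s j k i * lam (F j) i.
have d0 j k : 0 <= d j k by apply: sumr_ge0 => i _; rewrite mulr_ge0 // lam_ge0.
have -> : Nq q (lam M) = Nq q (fun k => \sum_j d j k).
  by rewrite /Nq; congr (_ `^ _); apply: eq_bigr => k _; rewrite [lam M k]E.
apply: le_trans (minkowski q0 Hsg d0) _.
apply: sg_sum => j; apply: Nq_dstoch => // i; exact: lam_ge0.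
Qed.
End Mat.


Lemma rank_diag2 (F : fieldType) n (d : 'rV[F]_n) k1 k2 :
  k1 != k2 -> d 0 k1 != 0 -> d 0 k2 != 0 -> (2 <= \rank (diag_mx d))%N.
Proof.
move=> k12 d1 d2; set D := diag_mx d.
pose E : 'M[F]_(1 + 1, n) := col_mx (delta_mx 0 k1) (delta_mx 0 k2).
pose G : 'M[F]_(n, 1 + 1) := row_mx (delta_mx k1 0) (delta_mx k2 0).
have le : (\rank (E *m D *m G) <= \rank D)%N.
  exact: leq_trans (mxrankM_maxl _ _) (mxrankM_maxr _ _).
have HG : E *m D *m G = block_mx (col k1 (row k1 D)) (col k2 (row k1 D))
                                  (col k1 (row k2 D)) (col k2 (row k2 D)).
  by rewrite /E /G !mul_mx_row !mul_col_mx -!rowE -!colE block_mxEh.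
have Z : col k2 (row k1 D) = 0.
  by apply/matrixP => i j; rewrite !mxE (negPf k12) mulr0n.
have U : E *m D *m G \in unitmx.
  rewrite unitmxE HG Z det_lblock !det_mx11 !mxE !eqxx !mulr1n unitfE.
  by rewrite mulf_neq0.
by move: le; rewrite mxrank_unit.
Qed.

Section R1.
Variable R : realType.
Local Notation CC := (R[i]).

Lemma conj_real (x : R) : Num.conj (real_complex R x) = real_complex R x.
Proof. by apply: conj_Creal; rewrite complex_real. Qed.

Lemma sum_single (q : R) N (x : 'I_N -> R) : 0 < q -> (forall k, 0 <= x k) ->
  (forall k l, k != l -> x k != 0 -> x l != 0 -> False) ->
  \sum_k x k `^ q = (\sum_k x k) `^ q.
Proof.
move=> q0 x0 H.
have [k0 nz|all0] := pickP (fun k => x k != 0).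
  have z l : l != k0 -> x l = 0.
    by move=> lk; apply/eqP; apply: contraT => /(H _ _ lk)/(_ nz).
  rewrite (bigD1 k0) // [in RHS](bigD1 k0) //= !big1 ?addr0 // => l lk.
    by rewrite (z _ lk) ?powR0 ?gt_eqF.
have z k : x k = 0 by have := all0 k => /negbFE/eqP.
rewrite !big1 ?powR0 ?gt_eqF // => k _; by rewrite z ?powR0 ?gt_eqF.
Qed.

Lemma trace_core n (G U : 'M[CC]_n) (d : 'rV[CC]_n) : U \is unitarymx ->
  diag_mx d = U *m G *m adjmx U -> \sum_k d 0 k = \tr G.
Proof.
move=> Uu H; rewrite -mxtrace_diag H mxtrace_mulC mulmxA unitary_adj // mul1mx //.
Qed.

Lemma rank_core n (G U : 'M[CC]_n) (d : 'rV[CC]_n) :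
  diag_mx d = U *m G *m adjmx U -> (\rank (diag_mx d) <= \rank G)%N.
Proof.
by move=> ->; apply: leq_trans (mxrankM_maxl _ _) (mxrankM_maxr _ _).
Qed.

Lemma Re_real (x : R) : complex.Re (real_complex R x) = x.
Proof. by []. Qed.

Lemma rank1 (q : R) N (K : 'M[R]_(2, N)) : 0 < q -> (\rank K <= 1)%N ->
  \sum_k lam (adjmx (mxRtoC K) *m mxRtoC K) k `^ q = (\sum_i \sum_j K i j ^+ 2) `^ q.
Proof.
move=> q0 rK.
have gG := gram_adj (mxRtoC K).
have HD := spectral_diagE gG; have Uu := spectral_unitarymx (adjmx (mxRtoC K) *m mxRtoC K).
rewrite (sum_single q0 (fun k => lam_ge0 k gG)).
  congr (_ `^ q).
  rewrite /lam -Re_sum (trace_core Uu HD) /mxtrace Re_sum.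
  under eq_bigr do rewrite mxE Re_sum.
  rewrite exchange_big /=.
  apply: eq_bigr => i _; apply: eq_bigr => j _.
  by rewrite /mxRtoC adjmxE !mxE conj_real Re_mul_real Re_real.
move=> k l kl nzk nzl.
have nz x : lam (adjmx (mxRtoC K) *m mxRtoC K) x != 0 ->
    spectral_diag (adjmx (mxRtoC K) *m mxRtoC K) 0 x != 0.
  by move=> H; rewrite (lamE x gG); apply: contra H => /eqP/complexI ->.
have := rank_diag2 kl (nz _ nzk) (nz _ nzl).
move/leq_trans/(_ (rank_core HD)) => H.
have := leq_trans H (mxrankM_maxr _ _).
by rewrite /mxRtoC mxrank_map => /leq_trans/(_ rK).
Qed.
End R1.


Section Main.
Variable R : realType.
Local Notation CC := (R[i]).
Variable p : R.
Hypothesis p0 : 0 < p.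
Let q := p / 2.
Let q0 : 0 < q. Proof. by rewrite /q divr_gt0. Qed.

Definition nq m n (X : 'M[CC]_(m, n)) := Nq q (lam (adjmx X *m X)).

Lemma schattenE m n (X : 'M[CC]_(m, n)) : schatten X p = nq X `^ (2^-1).
Proof.
rewrite /schatten /nq /Nq -powRrM; congr (_ `^ _); rewrite /q; field.
by rewrite gt_eqF.
Qed.

Lemma nq_ge0 m n (X : 'M[CC]_(m, n)) : 0 <= nq X.
Proof. exact: Nq_ge0. Qed.

Lemma schatten_sq m n (X : 'M[CC]_(m, n)) : schatten X p ^+ 2 = nq X.
Proof.
rewrite schattenE -powR_mulrn ?powR_ge0 // -powRrM mulVf ?pnatr_eq0 // powRr1 //.
exact: nq_ge0.
Qed.

Lemma nq_adj m n (X : 'M[CC]_(m, n)) : nq X = Nq q (lam (X *m adjmx X)).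
Proof. by rewrite /nq /Nq transfer // gt_eqF. Qed.

Lemma adjmx_col m1 m2 n (A : 'M[CC]_(m1, n)) (B : 'M[CC]_(m2, n)) :
  adjmx (col_mx A B) = row_mx (adjmx A) (adjmx B).
Proof. by rewrite /adjmx tr_col_mx map_row_mx. Qed.

Lemma adjmx_mxrow N m (n : 'I_N -> nat) (C : forall j, 'M[CC]_(m, n j)) :
  adjmx (\mxrow_j C j) = \mxcol_j adjmx (C j).
Proof. by apply/matrixP => i j; rewrite !mxE. Qed.

Lemma block2N_row N m1 m2 (n : 'I_N -> nat)
    (A : forall j : 'I_N, 'M[CC]_(m1, n j)) (B : forall j : 'I_N, 'M[CC]_(m2, n j)) :
  block2N A B = \mxrow_j col_mx (A j) (B j).
Proof.
apply/matrixP => i j; rewrite /block2N !mxE.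
by case: splitP => k _; rewrite !mxE.
Qed.


Lemma main_sg (sg : R) N m1 m2 (n : 'I_N -> nat)
    (A : forall j : 'I_N, 'M[CC]_(m1, n j)) (B : forall j : 'I_N, 'M[CC]_(m2, n j)) :
  (sg = 1 /\ 1 <= q) \/ (sg = -1 /\ q <= 1) ->
  (\rank (norm_compression A B p) <= 1)%N ->
  sg * schatten (block2N A B) p <= sg * schatten (mxRtoC (norm_compression A B p)) p.
Proof.
move=> Hsg rK.
rewrite !schattenE; apply: sg_powR; first exact: Hsg.
all: rewrite ?nq_ge0 ?invr_ge0 //.
set C := fun j => col_mx (A j) (B j).
have step1 : sg * nq (block2N A B) <= sg * \sum_j nq (C j).
  rewrite nq_adj block2N_row.
  have -> : \sum_j nq (C j) = \sum_j Nq q (lam (C j *m adjmx (C j))).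
    by apply: eq_bigr => j _; rewrite nq_adj.
  apply: (gram_mink q0 Hsg) => //; first exact: gram_adj'.
    by move=> j; exact: gram_adj'.
  by rewrite adjmx_mxrow mul_mxrow_mxcol.
have step2 : sg * \sum_j nq (C j) <= sg * \sum_j (nq (A j) + nq (B j)).
  apply: sg_sum => j.
  pose F (b : bool) := if b then adjmx (A j) *m A j else adjmx (B j) *m B j.
  have -> : nq (A j) + nq (B j) = \sum_b Nq q (lam (F b)) by rewrite big_bool.
  apply: (gram_mink q0 Hsg); first exact: gram_adj.
    by case; exact: gram_adj.
  by rewrite big_bool /F /C adjmx_col mul_row_col.
apply: (le_trans step1); apply: (le_trans step2).
have E : \sum_j (nq (A j) + nq (B j)) =
    \sum_j (schatten (A j) p ^+ 2 + schatten (B j) p ^+ 2).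
  apply: eq_bigr => j _; congr (_ + _); symmetry; exact: schatten_sq.
have -> : nq (mxRtoC (norm_compression A B p)) = \sum_j (nq (A j) + nq (B j)).
  rewrite E /nq /Nq (rank1 q0 rK) -powRrM mulfV ?gt_eqF // powRr1; last first.
    by apply: sumr_ge0 => i _; apply: sumr_ge0 => j _; rewrite sqr_ge0.
  rewrite exchange_big /=; apply: eq_bigr => j _.
  rewrite big_ord_recl big_ord1 !mxE eqxx eq_sym (negPf (neq_lift _ _)).
  exact: erefl.
exact: lexx.
Qed.
End Main.


Theorem mainTheorem2 (R : realType) (N m1 m2 : nat) (n : 'I_N -> nat)
    (A : forall j : 'I_N, 'M[R[i]]_(m1, n j)) (B : forall j : 'I_N, 'M[R[i]]_(m2, n j))
    (p : R) :
  0 < p ->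
  (\rank (norm_compression A B p) <= 1)%N ->
  (2 <= p -> schatten (block2N A B) p <= schatten (mxRtoC (norm_compression A B p)) p) /\
  (p <= 2 -> schatten (mxRtoC (norm_compression A B p)) p <= schatten (block2N A B) p).
Proof.
move=> p0 rK; split => hp.
  have H1 : ((1 : R) = 1 /\ 1 <= p / 2) \/ ((1 : R) = -1 /\ p / 2 <= 1).
    by left; split => //; rewrite ler_pdivlMr // mul1r.
  have := @main_sg R p p0 1 N m1 m2 n A B H1 rK.
  by rewrite !mul1r; exact: id.
have H1 : ((-1 : R) = 1 /\ 1 <= p / 2) \/ ((-1 : R) = -1 /\ p / 2 <= 1).
  by right; split => //; rewrite ler_pdivrMr // mul1r.
have := @main_sg R p p0 (-1) N m1 m2 n A B H1 rK.
by rewrite !mulN1r lerN2; exact: id.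
Qed.
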